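(* For every integer $n>1$, there exist thresholds $0<\tau_-(n)<\tau_+(n)<\infty$ such that for every $\tau<\tau_-(n)$ (respectively $\tau>\tau_+(n)$), the function $f_{n,\tau}\colon[1,n-1]\to\mathbb{R}$ defined by $f_{n,\tau}(x)=(x+1)\log\big(n-x-1+e^{1/\tau}+xe^{-1/(\tau x)}\big)$ is strictly concave (respectively strictly convex). *)

(* Defs.v *)
From Stdlib Require Import Reals.
Open Scope R_scope.

Definition f_ntau (n : nat) (tau x : R) : R :=
  (x + 1) * ln (INR n - x - 1 + exp (1 / tau) + x * exp (- (1 / (tau * x)))).

Definition strictly_concave_on (a b : R) (f : R -> R) : Prop :=
  forall x y t, a <= x <= b -> a <= y <= b -> x <> y -> 0 < t < 1 ->
    t * f x + (1 - t) * f y < f (t * x + (1 - t) * y).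

Definition strictly_convex_on (a b : R) (f : R -> R) : Prop :=
  forall x y t, a <= x <= b -> a <= y <= b -> x <> y -> 0 < t < 1 ->
    f (t * x + (1 - t) * y) < t * f x + (1 - t) * f y.

(* Main.v *)
Require Import Defs.
From Stdlib Require Import Reals Lra Lia.
From Coquelicot Require Import Coquelicot.
Open Scope R_scope.
Definition gg n tau x := INR n - x - 1 + exp (1/tau) + x * exp (-(1/(tau*x))).
Definition g1 tau x := -1 + exp(-(1/(tau*x))) * (1 + 1/(tau*x)).
Definition g2 tau x := exp(-(1/(tau*x))) * (1/(tau*x))^2 / x.
Definition f1 n tau x := ln (gg n tau x) + (x+1) * g1 tau x / gg n tau x.
Definition f2 n tau x := 2 * g1 tau x / gg n tau x +
   (x+1) * (g2 tau x / gg n tau x - (g1 tau x / gg n tau x)^2).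

Lemma f2_eq n tau x : 0 < x -> 0 < gg n tau x ->
  f2 n tau x = (gg n tau x * (2 * g1 tau x + (x+1) * g2 tau x) - (x+1) * (g1 tau x)^2)
     / (gg n tau x)^2.
Proof. intros hx hg. unfold f2. field. lra. Qed.

Lemma gg_pos n tau x : 0 < x -> x <= INR n - 1 -> exp (1/tau) <= gg n tau x.
Proof. intros hx hxn. unfold gg.
 assert (0 < exp (-(1/(tau*x)))) by apply exp_pos.
 assert (0 < x * exp (-(1/(tau*x)))) by (apply Rmult_lt_0_compat; lra). lra. Qed.

Lemma expS_E s : exp (- s) * exp s = 1.
Proof. rewrite exp_Ropp. field. apply Rgt_not_eq, exp_pos. Qed.

Lemma h_ineq s : 0 <= s -> 1 - s^2/2 <= exp (- s) * (1 + s).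
Proof.
intros hs. destruct (Req_dec s 0) as [->|hs0].
{ rewrite Ropp_0, exp_0. lra. }
set (phi := fun u => exp (- u) * (1 + u) + u^2/2).
destruct (MVT_cor2 phi (fun u => u * (1 - exp (- u))) 0 s) as [c [e hc]].
- lra.
- intros c hc. apply is_derive_Reals. unfold phi. auto_derive. { exact I. } field.
- unfold phi in e. rewrite Ropp_0, exp_0 in e.
  assert (exp (- c) <= 1).
  { rewrite <- exp_0. destruct (Req_dec c 0) as [->|]; [rewrite Ropp_0; lra|].
    left. apply exp_increasing. lra. }
  assert (0 <= c * (1 - exp (- c)) * (s - 0)).
  { apply Rmult_le_pos; [apply Rmult_le_pos|]; lra. }
  lra.
Qed.

Lemma sign_concave n tau x : (1 < n)%nat -> 0 < tau -> tau < 1 / (18 * INR n) ->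
  1 <= x <= INR n - 1 -> f2 n tau x < 0.
Proof.
intros hn ht htm hx.
assert (hn2 : 2 <= INR n) by (apply (le_INR 2); lia).
assert (hg : 0 < gg n tau x).
{ pose proof (gg_pos n tau x). pose proof (exp_pos (1/tau)). lra. }
rewrite f2_eq by lra.
unfold Rdiv at 1. rewrite <- (Rmult_0_l (/ (gg n tau x)^2)).
apply Rmult_lt_compat_r. { apply Rinv_0_lt_compat. apply pow_lt. lra. }
set (S := 1/(tau*x)). set (E := exp (- S)).
assert (hSx : S * (tau * x) = 1) by (unfold S; field; lra).
assert (hS : 18 < S).
{ assert (tau * x < 1/18).
  { assert (tau * (18 * INR n) < 1).
    { apply (Rmult_lt_compat_r (18 * INR n)) in htm; [|lra].
      unfold Rdiv in htm. rewrite Rmult_1_l, Rinv_l in htm; lra. }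
    nra. }
  apply (Rmult_lt_reg_r (tau * x)); [nra|]. rewrite hSx. lra. }
assert (hE : E * exp S = 1) by apply expS_E.
assert (hexp : (1 + S/3)^3 < exp S).
{ replace S with (S/3 + S/3 + S/3) at 2 by field.
  rewrite !exp_plus. pose proof (exp_ineq1 (S/3)).
  assert (S/3 <> 0) by lra.
  set (a := 1 + S/3) in *. set (b := exp (S/3)) in *.
  assert (0 < a) by (unfold a; lra).
  assert (a * a < b * b) by nra.
  assert (a * a * a < b * b * b) by nra. simpl. lra. }
assert (hEp : 0 < E) by apply exp_pos.
assert (hA : 2 * g1 tau x + (x+1) * g2 tau x < 0).
{ unfold g1, g2. fold S E.
  assert ((x + 1) * (E * S^2 / x) <= 2 * (E * S^2)).
  { unfold Rdiv. 
    replace ((x + 1) * (E * S ^ 2 * / x)) with ((1 + /x) * (E * S^2)) by (field; lra).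
    apply Rmult_le_compat_r. { nra. }
    assert (/x <= 1). { rewrite <- Rinv_1. apply Rinv_le_contravar; lra. } lra. }
  assert (1 + S + S^2 <= (1 + S/3)^3) by nra.
  assert (E * (1 + S + S^2) < E * exp S) by (apply Rmult_lt_compat_l; lra).
  nra. }
assert (0 <= (x+1) * (g1 tau x)^2) by (apply Rmult_le_pos; [lra| apply pow2_ge_0]).
nra.
Qed.

Lemma sign_convex n tau x : 4 < tau ->
  1 <= x <= INR n - 1 -> 0 < f2 n tau x.
Proof.
intros ht hx.
assert (hg : 1 <= gg n tau x).
{ pose proof (gg_pos n tau x). pose proof (exp_ineq1_le (1/tau)).
  assert (0 < 1/tau) by (apply Rdiv_lt_0_compat; lra). lra. }
rewrite f2_eq by lra.
apply Rdiv_lt_0_compat; [|apply pow_lt; lra].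
set (S := 1/(tau*x)). set (E := exp (- S)). set (w := / x).
assert (hSx : S = w / tau) by (unfold S, w; field; lra).
assert (hw : 0 < w <= 1).
{ split. unfold w; apply Rinv_0_lt_compat; lra.
  unfold w; rewrite <- Rinv_1; apply Rinv_le_contravar; lra. }
assert (hxw : x * w = 1) by (unfold w; field; lra).
assert (hS0 : 0 < S) by (rewrite hSx; apply Rdiv_lt_0_compat; lra).
assert (hSw : S * tau = w) by (rewrite hSx; field; lra).
assert (hE : E * exp S = 1) by apply expS_E.
assert (hEp : 0 < E) by apply exp_pos.
assert (hE1 : 1 - S <= E) by (pose proof (exp_ineq1_le (- S)); unfold E; lra).
assert (hG1u : g1 tau x <= 0).
{ unfold g1. fold S E. pose proof (exp_ineq1_le S). nra. }
assert (hG1l : - (S^2/2) <= g1 tau x).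
{ unfold g1. fold S E. pose proof (h_ineq S). unfold E. lra. }
assert (hA : S^2 * w / 2 <= 2 * g1 tau x + (x+1) * g2 tau x).
{ unfold g2. fold S E.
  replace ((x + 1) * (E * S ^ 2 / x)) with (E * S^2 * (1 + w)) by (unfold w; field; lra).
  assert (S^2 * (1 - S) * (1 + w) <= E * S^2 * (1 + w)).
  { assert (0 <= S^2 * (1 + w)) by nra. nra. }
  assert (S <= w / 4).
  { rewrite hSx. unfold Rdiv. apply Rmult_le_compat_l; [lra|].
    apply Rinv_le_contravar; lra. }
  assert (S^2 * w / 2 <= - S^2 + S^2 * (1 - S) * (1 + w)).
  { assert (0 <= S^2) by nra.
    assert (S * (1 + w) <= w / 2) by nra.
    assert (0 <= S^2 * (w / 2 - S * (1 + w))) by (apply Rmult_le_pos; lra).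
    nra. }
  lra. }
assert (hsq : (g1 tau x)^2 <= S^4/4) by nra.
assert (hB : (x+1) * (g1 tau x)^2 <= (x+1) * (S^4 / 4)) by (apply Rmult_le_compat_l; lra).
assert (hC : (x+1) * (S^4/4) < S^2 * w / 2).
{ assert (e : (x + 1) * S^2 = (1 + w) * w / (tau * tau)).
  { rewrite hSx. unfold w. field. lra. }
  assert (hq : (1 + w) * w / (tau * tau) < 2 * w).
  { apply (Rmult_lt_reg_r (tau * tau)); [nra|].
    unfold Rdiv. rewrite Rmult_assoc, Rinv_l, Rmult_1_r by nra. nra. }
  assert (0 < S^2) by nra.
  assert (0 < S^2 * (2 * w - (x + 1) * S^2)) by (apply Rmult_lt_0_compat; lra).
  nra. }
assert (0 < 2 * g1 tau x + (x+1) * g2 tau x) by nra.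
nra.
Qed.
Lemma d1 n tau x : tau <> 0 -> 0 < x -> 0 < gg n tau x ->
  is_derive (f_ntau n tau) x (f1 n tau x).
Proof.
intros ht hx hg. unfold f_ntau. auto_derive.
- split; [|split; [|exact I]].
  + apply Rmult_integral_contrapositive; split; lra.
  + exact hg.
- unfold f1, gg, g1 in *. unfold Rminus, Rdiv in *.
  field. split; lra.
Qed.

Lemma d2 n tau x : tau <> 0 -> 0 < x -> 0 < gg n tau x ->
  is_derive (f1 n tau) x (f2 n tau x).
Proof.
intros ht hx hg. unfold f1, gg, g1. auto_derive.
- repeat split; try (apply Rmult_integral_contrapositive; split; lra); try exact hg;
  unfold gg in hg; lra.
- unfold f2, gg, g1, g2 in *. unfold Rminus, Rdiv in *.
  field. repeat split; lra.
Qed.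
Lemma convex_from_f2 (f f1 f2 : R -> R) a b :
 (forall x, a<=x<=b -> derivable_pt_lim f x (f1 x)) ->
 (forall x, a<=x<=b -> derivable_pt_lim f1 x (f2 x)) ->
 (forall x, a<=x<=b -> 0 < f2 x) -> strictly_convex_on a b f.
Proof.
intros H1 H2 H3.
assert (inc : forall u v, a <= u -> u < v -> v <= b -> f1 u < f1 v).
{ intros u v hu huv hv.
  destruct (MVT_cor2 f1 f2 u v huv) as [c [hc1 hc2]].
  - intros c hc; apply H2; lra.
  - assert (0 < f2 c) by (apply H3; lra).
    assert (0 < f2 c * (v - u)) by (apply Rmult_lt_0_compat; lra). lra. }
assert (key : forall x y t, a <= x -> x < y -> y <= b -> 0 < t < 1 ->
  f (t * x + (1 - t) * y) < t * f x + (1 - t) * f y).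
{ intros x y t hx hxy hy ht.
  set (z := t * x + (1 - t) * y).
  assert (hz1 : x < z) by (unfold z; nra).
  assert (hz2 : z < y) by (unfold z; nra).
  destruct (MVT_cor2 f f1 x z hz1) as [c1 [e1 hc1]].
  { intros c hc; apply H1; lra. }
  destruct (MVT_cor2 f f1 z y hz2) as [c2 [e2 hc2]].
  { intros c hc; apply H1; lra. }
  assert (hlt : f1 c1 < f1 c2) by (apply inc; lra).
  assert (ez1 : z - x = (1 - t) * (y - x)) by (unfold z; ring).
  assert (ez2 : y - z = t * (y - x)) by (unfold z; ring).
  rewrite ez1 in e1. rewrite ez2 in e2.
  assert (0 < t * (1 - t) * (y - x) * (f1 c2 - f1 c1)).
  { repeat apply Rmult_lt_0_compat; lra. }
  assert (f z - (t * f x + (1 - t) * f y) = - (t * (1 - t) * (y - x) * (f1 c2 - f1 c1))).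
  { replace (f z - (t * f x + (1 - t) * f y)) with
      (t * (f z - f x) - (1 - t) * (f y - f z)) by ring.
    rewrite e1, e2. ring. }
  lra. }
intros x y t hx hy hxy ht.
destruct (Rlt_or_le x y) as [h|h].
- apply key; lra.
- replace (t * x + (1 - t) * y) with ((1 - t) * y + (1 - (1 - t)) * x) by ring.
  replace (t * f x + (1 - t) * f y) with ((1 - t) * f y + (1 - (1 - t)) * f x) by ring.
  apply key; lra.
Qed.

Lemma concave_from_f2 (f f1 f2 : R -> R) a b :
 (forall x, a<=x<=b -> derivable_pt_lim f x (f1 x)) ->
 (forall x, a<=x<=b -> derivable_pt_lim f1 x (f2 x)) ->
 (forall x, a<=x<=b -> f2 x < 0) -> strictly_concave_on a b f.
Proof.
intros H1 H2 H3.
assert (C : strictly_convex_on a b (fun x => - f x)).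
{ apply (convex_from_f2 _ (fun x => - f1 x) (fun x => - f2 x)).
  - intros x hx. apply derivable_pt_lim_opp. auto.
  - intros x hx. apply derivable_pt_lim_opp. auto.
  - intros x hx. specialize (H3 x hx). lra. }
intros x y t hx hy hxy ht. specialize (C x y t hx hy hxy ht). simpl in C. lra.
Qed.

Theorem lemma15 (n : nat) (hn : (1 < n)%nat) :
  exists tau_minus tau_plus : R,
    0 < tau_minus /\ tau_minus < tau_plus /\
    (forall tau, 0 < tau -> tau < tau_minus ->
       strictly_concave_on 1 (INR n - 1) (f_ntau n tau)) /\
    (forall tau, tau_plus < tau ->
       strictly_convex_on 1 (INR n - 1) (f_ntau n tau)).
Proof.
assert (hn2 : 2 <= INR n) by (apply (le_INR 2); lia).
assert (hm : 0 < 1 / (18 * INR n)) by (apply Rdiv_lt_0_compat; lra).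
assert (hm4 : 1 / (18 * INR n) < 4).
{ apply (Rmult_lt_reg_r (18 * INR n)); [lra|].
  unfold Rdiv. rewrite Rmult_assoc, Rinv_l, Rmult_1_r by lra. lra. }
assert (hgp : forall tau x, 0 < tau -> 1 <= x <= INR n - 1 -> 0 < gg n tau x).
{ intros tau x ht hx. pose proof (gg_pos n tau x). pose proof (exp_pos (1/tau)). lra. }
exists (1 / (18 * INR n)), 4. split; [exact hm|]. split; [exact hm4|]. split.
- intros tau ht htm.
  apply (concave_from_f2 _ (f1 n tau) (f2 n tau)).
  + intros x hx. apply is_derive_Reals. apply d1; [lra|lra|auto].
  + intros x hx. apply is_derive_Reals. apply d2; [lra|lra|auto].
  + intros x hx. apply sign_concave; auto.
- intros tau ht.
  apply (convex_from_f2 _ (f1 n tau) (f2 n tau)).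
  + intros x hx. apply is_derive_Reals. apply d1; [lra|lra|apply hgp; lra].
  + intros x hx. apply is_derive_Reals. apply d2; [lra|lra|apply hgp; lra].
  + intros x hx. apply sign_convex; auto.
Qed.
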